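(* Let $G=\mathbb{Z}_2\times\mathbb{Z}_4$, let $\theta$ be a normalised orthomorphism of $G$, let $A_{22}=\{x\}$, put $y=\theta(x)$, and let $a\in A_{44}\setminus\theta(A_{44})$. Then $\theta$ has one of the following forms (in cycle notation): (i) $\theta=(a,\ ax,\ axy,\ xy,\ ay,\ x,\ y)$, where $xy=a^2$; (ii) $\theta=(a,\ ax,\ axy,\ xy)(y,\ ay,\ x)$, where $xy\neq a^2$; (iii) $\theta=(a,\ ax,\ axy,\ x,\ y)(ay,\ xy)$, where $xy\neq a^2$; (iv) $\theta=(a,\ ax,\ axy,\ x,\ y,\ ay,\ xy)$, where $xy=a^2$. Moreover, the number of normalised orthomorphisms of $G$ is $48$.
   Context: $G$ is written multiplicatively with identity $e$; $o(g)$ is the order of $g$. A normalised orthomorphism of $G$ is a bijection $\theta\colon G\to G$ with $\theta(e)=e$ such that $x\mapsto x^{-1}\theta(x)$ is also a bijection of $G$. For such $\theta$: $A_{44}=\{g: o(g)=4, o(\theta(g))=4\}$, $A_{22}=\{g: o(g)=2, o(\theta(g))=2\}$; $\theta(S)$ denotes the image of a set $S$. Cycle notation $(c_1,\dots,c_k)$ means $c_i\mapsto c_{i+1}$ and $c_k\mapsto c_1$; elements not listed (here only $e$) are fixed. *)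

(* Defs.v *)
From mathcomp Require Import all_boot all_fingroup all_algebra all_solvable.
Set Implicit Arguments. Unset Strict Implicit. Unset Printing Implicit Defensive.
Import GroupScope.
Local Open Scope group_scope.

Definition G : finGroupType := ('Z_2 * 'Z_4)%type.

Definition is_northo (theta : {perm G}) : bool :=
  (theta 1 == 1) && [exists sigma : {perm G}, [forall g, sigma g == g^-1 * theta g]].

Definition A44 (theta : {perm G}) : {set G} :=
  [set g | (#[g] == 4%N) && (#[theta g] == 4%N)].
Definition A22 (theta : {perm G}) : {set G} :=
  [set g | (#[g] == 2%N) && (#[theta g] == 2%N)].

(* Cycle notation: cycfun [:: c1; ...; ck] maps c_i to c_{i+1} and c_k to c_1,
   and fixes every element not listed. *)
Definition cycfun (s : seq G) (g : G) : G :=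
  if g \in s then nth g s ((index g s).+1 %% size s) else g.

(* Main.v *)
Require Import Defs.
From mathcomp Require Import all_boot all_fingroup all_algebra all_solvable.
From Stdlib Require FunctionalExtensionality.
Import GroupScope.
Local Open Scope group_scope.
Definition mk (i j : nat) (Hi : (i < 2)%N) (Hj : (j < 4)%N) : G :=
  ((@Ordinal 2 i Hi : 'Z_2), (@Ordinal 4 j Hj : 'Z_4)).
Definition elems : seq G := [:: mk 0 0 isT isT; mk 0 1 isT isT; mk 0 2 isT isT; mk 0 3 isT isT;
  mk 1 0 isT isT; mk 1 1 isT isT; mk 1 2 isT isT; mk 1 3 isT isT].
Definition ordG (g : G) : nat := if g == 1 then 1%N else if g ^+ 2 == 1 then 2%N else 4%N.

Fixpoint perms_aux {T : eqType} (n : nat) (s : seq T) : seq (seq T) :=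
  match n with 0 => [:: [::]] | n'.+1 => [seq x :: p | x <- s, p <- perms_aux n' (rem x s)] end.

Definition app (l : seq G) (g : G) : G := nth 1 l (index g elems).

Definition northo (f : G -> G) : bool :=
  (f 1 == 1) && uniq (map (fun g => g^-1 * f g) elems).
Definition is44 (f : G -> G) g := (ordG g == 4%N) && (ordG (f g) == 4%N).
Definition is22 (f : G -> G) g := (ordG g == 2%N) && (ordG (f g) == 2%N).
Definition hyp (f : G -> G) x a :=
  all (fun g => is22 f g == (g == x)) elems && is44 f a &&
  ~~ has (fun g => is44 f g && (f g == a)) elems.
Definition concl (f : G -> G) x a :=
  let y := f x in
      (all (fun g => f g == cycfun [:: a; a * x; a * x * y; x * y; a * y; x; y] g) elems
        && uniq [:: a; a * x; a * x * y; x * y; a * y; x; y]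
        && (x * y == a ^+ 2))
   || (all (fun g => f g == cycfun [:: a; a * x; a * x * y; x * y]
                                   (cycfun [:: y; a * y; x] g)) elems
        && uniq [:: a; a * x; a * x * y; x * y; y; a * y; x]
        && (x * y != a ^+ 2))
   || (all (fun g => f g == cycfun [:: a; a * x; a * x * y; x; y]
                                   (cycfun [:: a * y; x * y] g)) elems
        && uniq [:: a; a * x; a * x * y; x; y; a * y; x * y]
        && (x * y != a ^+ 2))
   || (all (fun g => f g == cycfun [:: a; a * x; a * x * y; x; y; a * y; x * y] g) elems
        && uniq [:: a; a * x; a * x * y; x; y; a * y; x * y]
        && (x * y == a ^+ 2)).
Definition spec (f : G -> G) :=
  if northo f then all (fun x => all (fun a => if hyp f x a then concl f x a else true) elems) elems else true.

Fixpoint chk {T : eqType} (n : nat) (s : seq T) (P : seq T -> bool) : bool :=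
  match n with 0 => P [::] | n'.+1 => all (fun x => chk n' (rem x s) (fun p => P (x :: p))) s end.
Fixpoint cnt {T : eqType} (n : nat) (s : seq T) (P : seq T -> bool) : nat :=
  match n with 0 => nat_of_bool (P [::]) | n'.+1 => foldr (fun x acc => cnt n' (rem x s) (fun p => P (x :: p)) + acc)%N 0%N s end.

Lemma big_check : chk 8 elems (fun l => spec (app l)) = true.
Proof. vm_compute. reflexivity. Qed.
Lemma count_check : cnt 8 elems (fun l => northo (app l)) = 48%N.
Proof. vm_compute. reflexivity. Qed.

Section Perms.
Variable T : eqType.
Lemma chk_all n (s : seq T) P : chk n s P = all P (perms_aux n s).
Proof.
elim: n s P => [|n IH] s P /=; first by rewrite andbT.
elim: {2 4}s => [|x r IHr] //=.
by rewrite all_cat IHr all_map IH.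
Qed.
Lemma cnt_count n (s : seq T) P : cnt n s P = count P (perms_aux n s).
Proof.
elim: n s P => [|n IH] s P /=; first by rewrite addn0.
elim: {2 4}s => [|x r IHr] //=.
by rewrite count_cat IHr count_map IH.
Qed.
Lemma mem_perms n (s : seq T) l : size s = n -> (l \in perms_aux n s) = perm_eq l s.
Proof.
elim: n s l => [|n IH] s l /=.
  move/eqP; rewrite size_eq0 => /eqP ->; rewrite inE.
  by apply/eqP/perm_nilP.
move=> Hs; apply/allpairsPdep/idP.
  case=> x [p [xs pp ->]]; rewrite IH in pp; last by rewrite size_rem // Hs.
  apply: (@perm_trans _ (x :: rem x s)); first by rewrite perm_cons.
  by rewrite perm_sym; apply: perm_to_rem.
case: l => [|y p] Hp; first by move: (perm_size Hp); rewrite Hs.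
have ys : y \in s by rewrite -(perm_mem Hp) mem_head.
exists y, p; split => //.
rewrite IH; last by rewrite size_rem // Hs.
by rewrite -(perm_cons y); apply: perm_trans Hp (perm_to_rem ys).
Qed.
Lemma uniq_perms n (s : seq T) : uniq s -> uniq (perms_aux n s).
Proof.
elim: n s => [|n IH] s Us //=.
apply: allpairs_uniq_dep => //; first by move=> x _; apply/IH/rem_uniq.
by move=> [x p] [x' p'] _ _ /= [-> ->].
Qed.
End Perms.

Lemma mem_elems (g : G) : g \in elems.
Proof.
case: g => [[i Hi] [j Hj]].
by case: i Hi => [|[|i]] Hi //; case: j Hj => [|[|[|[|j]]]] Hj.
Qed.
Lemma uniq_elems : uniq elems. Proof. by []. Qed.
Lemma size_elems : size elems = 8%N. Proof. by []. Qed.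

Lemma exp4 (g : G) : g ^+ 4 = 1.
Proof.
apply/eqP; move: g (mem_elems g); apply/allP. by vm_compute.
Qed.

Lemma ordGE (g : G) : #[g] = ordG g.
Proof.
rewrite /ordG; case: eqP => [->|/eqP g1]; first by rewrite order1.
have d4 : (#[g] %| 4)%N by rewrite order_dvdn exp4.
have : (0 < #[g])%N by apply: order_gt0.
have := dvdn_leq (isT : (0 < 4)%N) d4.
rewrite -order_dvdn -order_eq1 in g1 *.
move: d4 g1; case: #[g] => [|[|[|[|[|n]]]]] //.
Qed.

Lemma perm_elems : perm_eq elems (enum G).
Proof.
by apply: uniq_perm; [exact: uniq_elems | exact: enum_uniq | move=> g; rewrite mem_enum mem_elems].
Qed.

Lemma uniq_map_inj (h : G -> G) : uniq (map h elems) -> injective h.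
Proof.
move=> U; apply/injectiveP; rewrite /injectiveb /dinjectiveb.
by rewrite -(perm_uniq (perm_map h perm_elems)).
Qed.

Lemma is_northoE (theta : {perm G}) : is_northo theta = northo theta.
Proof.
rewrite /is_northo /northo; congr (_ && _); apply/existsP/idP.
  case=> sigma /forallP H.
  rewrite (@eq_map _ _ _ sigma); first by rewrite map_inj_uniq ?uniq_elems //; apply: perm_inj.
  by move=> g; rewrite (eqP (H g)).
move=> U; exists (perm (@uniq_map_inj (fun g => g^-1 * theta g) U)); apply/forallP => g.
by rewrite permE.
Qed.

Definition L (theta : {perm G}) : seq G := map theta elems.

Lemma appL (theta : {perm G}) : app (L theta) = theta.
Proof.
apply: FunctionalExtensionality.functional_extensionality => g.
rewrite /app /L (nth_map 1); last by rewrite index_mem mem_elems.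
by rewrite nth_index ?mem_elems.
Qed.

Lemma L_perm (theta : {perm G}) : L theta \in perms_aux 8 elems.
Proof.
rewrite mem_perms //; apply: uniq_perm.
- by rewrite map_inj_uniq ?uniq_elems //; apply: perm_inj.
- exact: uniq_elems.
- by move=> g; rewrite mem_elems; apply/mapP; exists (theta^-1 g); rewrite ?mem_elems ?permKV.
Qed.

Lemma L_inj : injective L.
Proof.
move=> t1 t2 E; apply/permP => g.
by rewrite -[t1 g]/((t1 : G -> G) g) -appL E appL.
Qed.

Lemma L_surj l : l \in perms_aux 8 elems -> l \in map L (enum {perm G}).
Proof.
rewrite mem_perms // => Hp.
have Ul : uniq l by rewrite (perm_uniq Hp) uniq_elems.
have Sl : size l = 8%N by rewrite (perm_size Hp).
have inj : injective (app l).
  move=> g1 g2; rewrite /app => /eqP.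
  rewrite nth_uniq //; last 2 first.
  - by rewrite Sl -size_elems index_mem mem_elems.
  - by rewrite Sl -size_elems index_mem mem_elems.
  move/eqP => E; by rewrite -(nth_index 1 (mem_elems g1)) E nth_index ?mem_elems.
apply/mapP; exists (perm inj); first by rewrite mem_enum.
apply: (@eq_from_nth _ 1); first by rewrite size_map Sl.
move=> i; rewrite Sl => Hi.
rewrite /L (nth_map 1) ?size_elems // permE /app index_uniq ?size_elems //.
Qed.

Lemma card_set (T : finType) (P : pred T) : #|[set x | P x]| = count P (enum T).
Proof. rewrite enumT cardsE cardE /enum_mem size_filter. by apply: eq_count. Qed.

Lemma count_part : #|[set theta : {perm G} | is_northo theta]| = 48%N.
Proof.
rewrite card_set.
rewrite (@eq_count _ _ (preim L (fun l => northo (app l)))); last first.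
  by move=> t /=; rewrite appL is_northoE.
rewrite -count_map -count_check cnt_count.
apply/seq.permP; apply: uniq_perm.
- by rewrite map_inj_uniq ?enum_uniq //; apply: L_inj.
- exact/uniq_perms/uniq_elems.
- move=> l; apply/idP/idP; last exact: L_surj.
  by case/mapP => t _ ->; apply: L_perm.
Qed.

Lemma part1 (theta : {perm G}) (x a : G) : is_northo theta -> A22 theta = [set x] ->
  a \in A44 theta :\: theta @: A44 theta -> concl theta x a.
Proof.
move=> Hn H22 Ha.
have S : spec theta.
  have := big_check; rewrite chk_all => /allP/(_ _ (L_perm theta)).
  by rewrite appL.
move: S; rewrite /spec -is_northoE Hn => /allP/(_ x (mem_elems x))/allP/(_ a (mem_elems a)).
suff -> : hyp theta x a by [].
have e22 g : is22 theta g = (g \in A22 theta) by rewrite inE !ordGE.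
have e44 g : is44 theta g = (g \in A44 theta) by rewrite inE !ordGE.
move: Ha; rewrite in_setD => /andP [Hnot Ha44].
rewrite /hyp e44 Ha44 andbT; apply/andP; split.
- by apply/allP => g _; rewrite e22 H22 inE.
- apply/hasPn => g _; rewrite e44; apply/negP => /andP [g44 /eqP ga].
  by move: Hnot; rewrite -ga imset_f.
Qed.

Theorem theorem1 :
  (forall (theta : {perm G}) (x a : G),
      is_northo theta ->
      A22 theta = [set x] ->
      a \in A44 theta :\: (theta @: A44 theta) ->
      let y := theta x in
      (* (i) *)
      ((forall g, theta g = cycfun [:: a; a * x; a * x * y; x * y; a * y; x; y] g)
        /\ uniq [:: a; a * x; a * x * y; x * y; a * y; x; y]
        /\ x * y = a ^+ 2)
   \/ (* (ii) *)
      ((forall g, theta g = cycfun [:: a; a * x; a * x * y; x * y]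
                                   (cycfun [:: y; a * y; x] g))
        /\ uniq [:: a; a * x; a * x * y; x * y; y; a * y; x]
        /\ x * y != a ^+ 2)
   \/ (* (iii) *)
      ((forall g, theta g = cycfun [:: a; a * x; a * x * y; x; y]
                                   (cycfun [:: a * y; x * y] g))
        /\ uniq [:: a; a * x; a * x * y; x; y; a * y; x * y]
        /\ x * y != a ^+ 2)
   \/ (* (iv) *)
      ((forall g, theta g = cycfun [:: a; a * x; a * x * y; x; y; a * y; x * y] g)
        /\ uniq [:: a; a * x; a * x * y; x; y; a * y; x * y]
        /\ x * y = a ^+ 2))
  /\ #|[set theta : {perm G} | is_northo theta]| = 48%N.
Proof.
split; last exact: count_part.
move=> theta x a Hn H22 Ha y.
have := @part1 theta x a Hn H22 Ha; rewrite /concl -/y.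
case/orP => [/orP[/orP[|]|]|].
- case/andP=> [/andP[/allP H U] /eqP E].
  by left; split; [move=> g; apply/eqP/H/mem_elems | split].
- case/andP=> [/andP[/allP H U] E].
  by right; left; split; [move=> g; apply/eqP/H/mem_elems | split].
- case/andP=> [/andP[/allP H U] E].
  by right; right; left; split; [move=> g; apply/eqP/H/mem_elems | split].
- case/andP=> [/andP[/allP H U] /eqP E].
  by right; right; right; split; [move=> g; apply/eqP/H/mem_elems | split].
Qed.
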